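(* Let $n$ and $h$ be positive integers and let $m$ and $s$ be nonnegative integers with $h\le n-m$ and $s\le m$. Then, as an identity of rational functions in $q$ and $x$, $$\sum_{j=s}^{m}\sum_{k=s}^{n}\frac{(q^{-n};q)_j(q^{-n};q)_k(x;q)_j(x;q)_k(q^{j-m-h+1};q)_{h-1}(q^{k-m-h+1};q)_{h-1}(1-q^{k-j})\,q^{2j+k}}{(q;q)_{j-s}(q;q)_{j+s}(q;q)_{k-s}(q;q)_{k+s}}$$ $$=\frac{(q;q)_n^2\,(q;q)_{h-1}\,(x;q)_s\,(x;q)_{m+h}\,(q^{s+1}/x;q)_{n-s-h}\,x^{n-s-h}\,q^{\frac{m^2+3m-s^2+s}{2}-mn-mh-h^2+h}}{(-1)^{m-s-1}(q;q)_{m-s}(q;q)_{m+s}(q;q)_{n-s}(q;q)_{n+s}(q;q)_{n-m-h}}.$$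
   Context: For an indeterminate $q$ and an integer $n\ge 0$: $(a;q)_0=1$ and $(a;q)_n=(1-a)(1-aq)\cdots(1-aq^{n-1})$. *)

(* Defs.v *)
From HB Require Import structures.
From mathcomp Require Import all_boot all_order all_algebra.
Set Implicit Arguments. Unset Strict Implicit. Unset Printing Implicit Defensive.
Import Order.TTheory GRing.Theory Num.Theory.
Local Open Scope ring_scope.

Definition qpoch (R : comNzRingType) (q a : R) (n : nat) : R :=
  \prod_(i < n) (1 - a * q ^+ i).

(* The field of rational functions Q(q, x) in two independent indeterminates:
   the fraction field of Q[q][x]. *)
Definition RF : fieldType := {fraction {poly {poly rat}}}.
(* q : the inner variable, seen as a constant polynomial in x *)
Definition qv : RF := tofrac (('X : {poly rat})%:P).
Definition xv : RF := tofrac ('X : {poly {poly rat}}).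

(* Main.v *)
Require Import Defs.
From HB Require Import structures.
From mathcomp Require Import all_boot all_order all_algebra.
From mathcomp Require Import ring zify lra.
Import Order.TTheory GRing.Theory Num.Theory.
Local Open Scope ring_scope.
Set Implicit Arguments. Unset Strict Implicit.

Section Gen.
Variable K : fieldType.
Variable q : K.
Hypothesis hq0 : q != 0.
Hypothesis hq1 : forall k, (0 < k)%N -> q ^+ k != 1.

Lemma qpS a n : qpoch q a n.+1 = qpoch q a n * (1 - a * q ^+ n).
Proof. by rewrite /qpoch big_ord_recr. Qed.
Lemma qp0 a : qpoch q a 0 = 1.
Proof. by rewrite /qpoch big_ord0. Qed.
Lemma qp_add a i k : qpoch q a (i + k) = qpoch q a i * qpoch q (a * q ^+ i) k.
Proof.
elim: k => [|k IH]; first by rewrite addn0 qp0 mulr1.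
by rewrite addnS !qpS IH exprD; ring.
Qed.
Lemma qp_shift a k : qpoch q (a * q) k * (1 - a) = qpoch q a k * (1 - a * q ^+ k).
Proof.
elim: k => [|k IH]; first by rewrite !qp0 expr0 mulr1.
rewrite !qpS -mulrA [_ * (1 - a)]mulrC mulrA IH exprS; ring.
Qed.
Lemma qp_zero a i L : a * q ^+ i = 1 -> (i < L)%N -> qpoch q a L = 0.
Proof.
move=> ha hiL; rewrite -(subnKC hiL) qp_add qpS ha.
by rewrite subrr mulr0 mul0r.
Qed.
Lemma q1n k : (0 < k)%N -> 1 - q ^+ k != 0.
Proof. by move=> hk; rewrite subr_eq0 eq_sym hq1. Qed.
Lemma qpq_neq0 n : qpoch q q n != 0.
Proof.
elim: n => [|n IH]; first by rewrite qp0 oner_neq0.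
by rewrite qpS mulf_neq0 // -exprS q1n.
Qed.
Lemma qX_neq0 k : q ^+ k != 0.
Proof. by rewrite expf_neq0. Qed.
Lemma qz (z : int) (a b : nat) : z = a%:Z - b%:Z -> q ^ z = q ^+ a / q ^+ b.
Proof. by move=> ->; rewrite expfzDr // exprnN -exprnP. Qed.
End Gen.

Unset Implicit Arguments. Set Strict Implicit.

Lemma half_tri k : (2 * (k * k.-1)./2)%N = (k * k.-1)%N.
Proof.
rewrite mul2n -[RHS](odd_double_half (k * k.-1)) oddM.
by case: k => [|[|k]] //=; rewrite ?andbN ?andNb // negbK; case: (odd k).
Qed.
Lemma half_m3 k : (2 * (k * (k + 3))./2)%N = (k * (k + 3))%N.
Proof.
rewrite mul2n -[RHS](odd_double_half (k * (k + 3))) oddM oddD /=.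
by case: (odd k).
Qed.
Lemma triZ k : ((k * k.-1)%N)%:Z = k%:Z * (k%:Z - 1).
Proof. by case: k => [|k] //=; rewrite PoszM -addn1 PoszD addrK. Qed.
Lemma ar (m h s : nat) : (s <= m)%N ->
 (((m * (m + 3))./2)%:Z - ((s * s.-1)./2)%:Z - (m * (m + h))%:Z
      - (m * h)%:Z - (h * h)%:Z + h%:Z)
    = ((((m + h) * (m + h).-1)./2)%:Z - ((m + h) * (m + h))%:Z)
      + (((h * h.-1)./2)%:Z - ((m + h) * h)%:Z)
      + (((s * s.-1)./2)%:Z - (m * s)%:Z)
      + ((m + h) * 2 + (s + s * (m - s)))%N%:Z :> int.
Proof.
move=> hs.
have := half_tri (m + h); have := half_tri h; have := half_tri s; have := half_m3 m.
move: ((m + h) * (m + h).-1)./2%N => TN.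
move: (h * h.-1)./2%N => Th.
move: (s * s.-1)./2%N => Ts.
move: (m * (m + 3))./2%N => Hm.
move=> e1 e2 e3 e4.
move/(congr1 Posz): e1; move/(congr1 Posz): e2; move/(congr1 Posz): e3; move/(congr1 Posz): e4.
rewrite !triZ !PoszM !PoszD => e1 e2 e3 e4; rewrite !PoszM !PoszD -subzn //.
suff : 2 * (Hm%:Z - Ts%:Z - m%:Z * (m%:Z + h%:Z) - m%:Z * h%:Z - h%:Z * h%:Z + h%:Z
    - (TN%:Z - (m%:Z + h%:Z) * (m%:Z + h%:Z) + (Th%:Z - (m%:Z + h%:Z) * h%:Z)
       + (Ts%:Z - m%:Z * s%:Z) + ((m%:Z + h%:Z) * 2 + (s%:Z + s%:Z * (m%:Z - s%:Z))))) = 0.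
  by move/eqP; rewrite mulf_eq0 => /orP[//|]; rewrite subr_eq0 => /eqP.
rewrite (_ : 2 * _ = (Posz 2 * Hm - m%:Z * (m%:Z + 3)) - 2 * (Posz 2 * Ts - s%:Z * (s%:Z - 1))
   - (Posz 2 * TN - (m%:Z + h%:Z) * (m%:Z + h%:Z - 1)) - (Posz 2 * Th - h%:Z * (h%:Z - 1))); last by ring.
by rewrite e1 e2 e3 e4; ring.
Qed.

Section Main.
Variable K : fieldType.
Variables q x : K.
Hypothesis hq0 : q != 0.
Hypothesis hq1 : forall k, (0 < k)%N -> q ^+ k != 1.
Hypothesis hx0 : x != 0.
Hypothesis hxq : forall k : nat, x != q ^+ k.
Variables h m s : nat.
Hypothesis hh : (0 < h)%N.
Hypothesis hsm : (s <= m)%N.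

Local Notation u k := (q ^+ k).
Local Notation qp := (qpoch q).

Lemma uN0 k : u k != 0. Proof. exact: qX_neq0. Qed.
Lemma uN1 k : (0 < k)%N -> u k - 1 != 0.
Proof. by move=> hk; rewrite subr_eq0 hq1. Qed.
Lemma qpqN0 k : qp q k != 0. Proof. exact: qpq_neq0. Qed.
Lemma u1N0 k : (0 < k)%N -> 1 - u k != 0. Proof. exact: q1n. Qed.
Lemma u_neq a b : (a < b)%N -> u a != u b.
Proof.
move=> hab; rewrite -(subnKC (ltnW hab)) exprD.
have hb : (0 < b - a)%N by rewrite subn_gt0.
apply/eqP => e; move: (hq1 _ hb); rewrite -(mulfI (uN0 a) (etrans (mulr1 _) e)).
by rewrite eqxx.
Qed.
Lemma uB a b : (a <= b)%N -> u (b - a) = u b / u a.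
Proof. by move=> hab; rewrite -{2}(subnK hab) exprD mulfK // uN0. Qed.

Ltac nz := rewrite ?uN0 ?qpqN0 ?hq0 ?hx0 ?uN1 //.

Lemma subuN0 a b : a != b -> u a - u b != 0.
Proof.
move=> hab; rewrite subr_eq0; case: (ltngtP a b) hab => // hab _.
  exact: u_neq.
by rewrite eq_sym u_neq.
Qed.

Lemma subxuN0 a b : (b <= a)%N -> u a - x * u b != 0.
Proof.
move=> hba; rewrite -(subnK hba) exprD -mulrBl mulf_neq0 ?uN0 //.
by rewrite subr_eq0 eq_sym hxq.
Qed.

Lemma divN1 a b : u a != u b -> 1 - u a / u b != 0.
Proof.
move=> hab; rewrite subr_eq0 eq_sym; apply/negP => /eqP e.
by move/eqP: hab; apply; rewrite -[u a](divfK (uN0 b)) e mul1r.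
Qed.

Definition P k := qp (q ^ (k%:Z - m%:Z - h%:Z + 1)) h.-1.
Definition F N k := qp (q ^- N) k * qp x k * P k / (qp q (k - s) * qp q (k + s)).
Definition yy k := (1 - u k / u s) * (1 - u k * u s) * (1 - u k / u (m + h)).

Lemma P_step k : P k.+1 * (1 - u k.+1 / u (m + h)) = P k * (1 - u k / u m).
Proof.
rewrite /P.
have ea : q ^ (k%:Z - m%:Z - h%:Z + 1) = u k.+1 / u (m + h).
  by apply: qz => //; lia.
have eb : q ^ ((k.+1)%:Z - m%:Z - h%:Z + 1) = q ^ (k%:Z - m%:Z - h%:Z + 1) * q.
  rewrite ea; rewrite (qz (a:=k.+2) (b:=m+h) hq0); last by lia.
  by rewrite !exprS; field; rewrite uN0.
rewrite eb -ea qp_shift ea; congr (_ * (1 - _)).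
have eh : u (m + h) = u m * (u h.-1 * q) by rewrite -exprSr (prednK hh) exprD.
rewrite eh exprS; field.
by rewrite !uN0 hq0.
Qed.

Lemma F_step M k : (s <= k)%N ->
  yy k.+1 * F M k.+1 = F M k * ((1 - u k / u M) * (1 - x * u k) * (1 - u k / u m)).
Proof.
move=> hsk.
have -> : yy k.+1 * F M k.+1 = (1 - u k.+1 / u s) * (1 - u k.+1 * u s)
   * qp (q ^- M) k.+1 * qp x k.+1 / (qp q (k.+1 - s) * qp q (k.+1 + s))
   * (P k.+1 * (1 - u k.+1 / u (m + h))).
  by rewrite /yy /F; field; nz.
rewrite P_step /F subSn // addSn !qpS.
have ek : u k = u (k - s) * u s by rewrite -exprD subnK.
rewrite !exprS exprD ek; field.
have n1 : 1 - q * (u (k - s) * u s * u s) != 0 by rewrite -ek -exprD -exprS u1N0.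
have n2 : 1 - q * u (k - s) != 0 by rewrite -exprS u1N0.
rewrite n1 n2; nz.
Qed.

Lemma inv1N0 k : (0 < k)%N -> 1 - (u k)^-1 != 0.
Proof.
move=> hk; apply/negP; rewrite subr_eq0 => /eqP e.
have : u k = 1 by rewrite -[u k]invrK -e invr1.
by move/eqP; rewrite (negbTE (hq1 _ hk)).
Qed.

Definition c1 M := (u s)^-1 + u s + (u (m + h))^-1 - (u M)^-1 - x - (u m)^-1.
Definition c2 M := x / u M + (u M * u m)^-1 + x / u m - 1 - (u s * u (m + h))^-1
   - u s / u (m + h).
Definition c3 M := (u (m + h))^-1 - x / (u M * u m).
Definition Phi N t hi := \sum_(s <= k < hi) F N k * u k ^+ t.

Lemma tele M hi : (s <= hi)%N ->
  \sum_(s <= k < hi) F M k * (c1 M * u k + c2 M * u k ^+ 2 + c3 M * u k ^+ 3)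
  = yy hi * F M hi.
Proof.
move=> hs.
rewrite (@telescope_sumr_eq _ s hi (fun k => yy k * F M k)) //.
  by rewrite /yy divff ?uN0 // subrr !mul0r subr0.
move=> k /andP[hk _]; rewrite F_step // /c1 /c2 /c3 /yy; field; nz.
Qed.

Lemma rel M hi : (s <= hi)%N ->
  c1 M * Phi M 1 hi + c2 M * Phi M 2 hi + c3 M * Phi M 3 hi = yy hi * F M hi.
Proof.
move=> hs; rewrite -tele // /Phi !mulr_sumr -!big_split /=.
by apply: eq_bigr => k _; ring.
Qed.

Lemma F_top N : F N N.+1 = 0.
Proof. by rewrite /F (@qp_zero _ _ _ N) ?mul0r // mulVf ?uN0. Qed.

Lemma P_mid k : (m < k)%N -> (k < m + h)%N -> P k = 0.
Proof.
move=> h1 h2; rewrite /P (@qp_zero _ _ _ (m + h - k.+1)) //; last by lia.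
rewrite (@qz _ _ hq0 _ 0 (m + h - k.+1)); last by lia.
by rewrite expr0 mul1r mulVf ?uN0.
Qed.

Lemma yF_m M : yy m.+1 * F M m.+1 = 0.
Proof.
case: (ltnP 1 h) => h2.
  by rewrite /F P_mid ?mulr0 ?mul0r ?mulr0 //; lia.
have e1 : h = 1%N by apply/eqP; rewrite eqn_leq h2 hh.
by rewrite /yy e1 addn1 divff ?uN0 // subrr mulr0 mul0r.
Qed.

Lemma qp_contig N k : qp (q ^- N) k = qp (q ^- N.+1) k * (1 - (u N.+1)^-1 * u k) / (1 - (u N.+1)^-1).
Proof.
set a := (u N.+1)^-1.
have ea : a * q = (u N)^-1 by rewrite /a exprSr; field; nz.
have h1a : 1 - a != 0 by rewrite inv1N0.
by rewrite -ea -qp_shift mulfK.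
Qed.

Lemma F_contig N k : F N k = F N.+1 k * (1 - (u N.+1)^-1 * u k) / (1 - (u N.+1)^-1).
Proof.
set a := (u N.+1)^-1.
have ea : a * q = (u N)^-1 by rewrite /a exprSr; field; nz.
have h1a : 1 - a != 0 by rewrite inv1N0.
rewrite /F -ea.
have -> : qp (a * q) k = qp a k * (1 - a * u k) / (1 - a) by rewrite -qp_shift mulfK.
by field; rewrite h1a; nz.
Qed.

Lemma Phi_contig N t hi : Phi N t hi =
  (Phi N.+1 t hi - (u N.+1)^-1 * Phi N.+1 t.+1 hi) / (1 - (u N.+1)^-1).
Proof.
rewrite /Phi mulr_sumr -sumrB mulr_suml; apply: eq_bigr => k _.
by rewrite F_contig [u k ^+ t.+1]exprS; field; nz.
Qed.

Lemma Phi_top N t : (s <= N.+1)%N -> Phi N t N.+2 = Phi N t N.+1.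
Proof. by move=> hs; rewrite /Phi big_nat_recr //= F_top mul0r addr0. Qed.

Lemma casor (d1 d2 d3 a J1 J2 J3 L1 L2 L3 : K) : d3 != 0 -> 1 - a != 0 ->
  d1 * J1 + d2 * J2 + d3 * J3 = 0 -> d1 * L1 + d2 * L2 + d3 * L3 = 0 ->
  (J2 - a * J3) / (1 - a) * ((L1 - a * L2) / (1 - a))
  - (J1 - a * J2) / (1 - a) * ((L2 - a * L3) / (1 - a))
  = (J2 * L1 - J1 * L2) * ((d3 + a * d2 + a ^+ 2 * d1) / (d3 * (1 - a) ^+ 2)).
Proof.
move=> h3 ha hJ hL.
have eJ : J3 = - (d1 * J1 + d2 * J2) / d3.
  have e : d3 * J3 = -(d1 * J1 + d2 * J2) by apply/eqP; rewrite -addr_eq0 addrC hJ.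
  by rewrite -e; field.
have eL : L3 = - (d1 * L1 + d2 * L2) / d3.
  have e : d3 * L3 = -(d1 * L1 + d2 * L2) by apply/eqP; rewrite -addr_eq0 addrC hL.
  by rewrite -e; field.
by rewrite eJ eL; field; rewrite ha h3.
Qed.


Definition kap M := ((c3 M + (u M)^-1 * c2 M + (u M)^-1 ^+ 2 * c1 M)
   / (c3 M * (1 - (u M)^-1) ^+ 2)).
Definition C N := Phi N 2 m.+1 * Phi N 1 N.+1 - Phi N 1 m.+1 * Phi N 2 N.+1.

Lemma c3N0 M : (m + h < M)%N -> c3 M != 0.
Proof.
move=> hM.
have e : c3 M * (u M * u m) = u (M - h) - x.
  rewrite /c3 uB; last by lia.
  rewrite exprD; field; nz.
apply/eqP => e0; move: e; rewrite e0 mul0r => /eqP.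
by rewrite eq_sym subr_eq0 eq_sym (negbTE (hxq _)).
Qed.

Lemma C_step N : (m + h <= N)%N -> C N = C N.+1 * kap N.+1.
Proof.
move=> hN.
have hsN : (s <= N.+1)%N by lia.
rewrite /C -!(Phi_top N) // !(Phi_contig N) /kap.
apply: casor.
- by apply: c3N0; lia.
- by rewrite inv1N0.
- by rewrite rel ?yF_m //; lia.
- by rewrite rel ?F_top ?mulr0 //; lia.
Qed.

Lemma kap_nz M : (m + h < M)%N -> kap M != 0.
Proof.
move=> hM; set a := (u M)^-1.
have e : c3 M + a * c2 M + a ^+ 2 * c1 M
    = ((u (m + h))^-1 - a) * (1 - a / u s) * (1 - a * u s).
  by rewrite /a /c1 /c2 /c3; field; nz.
rewrite /kap -/a e; apply: mulf_neq0; last first.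
  by rewrite invr_neq0 // mulf_neq0 ?c3N0 // expf_neq0 // inv1N0 //; lia.
have n1 : (u (m + h))^-1 - a != 0.
  by rewrite subr_eq0 (inj_eq (inv_inj (@invrK _))) u_neq.
have n2 : 1 - a / u s != 0 by rewrite /a -invfM -exprD inv1N0 //; lia.
have n3 : 1 - a * u s != 0 by rewrite /a mulrC divN1 // u_neq //; lia.
by rewrite !mulf_neq0.
Qed.

Definition R N :=
  (qp q N ^+ 2 * qp q h.-1 * qp x s * qp x (m + h)
     * qp (u s.+1 / x) (N - s - h) * x ^+ (N - s - h)
     * q ^ (((m * (m + 3))./2)%:Z - ((s * s.-1)./2)%:Z
              - (m * N)%:Z - (m * h)%:Z - (h * h)%:Z + h%:Z))
  / ((-1) ^ (m%:Z - s%:Z - 1) * qp q (m - s) * qp q (m + s)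
     * qp q (N - s) * qp q (N + s) * qp q (N - m - h)).

Lemma m1z_nz (z : int) : (-1 : K) ^ z != 0.
Proof. by rewrite expfz_eq0 oppr_eq0 oner_eq0 andbF. Qed.

Lemma R_step N : (m + h <= N)%N -> R N.+1 * kap N.+1 = R N.
Proof.
move=> hN.
rewrite /R.
have -> : (N.+1 - s - h = (N - s - h).+1)%N by lia.
have -> : (N.+1 - s = (N - s).+1)%N by lia.
have -> : (N.+1 - m - h = (N - m - h).+1)%N by lia.
rewrite addSn !qpS.
set E := (((m * (m + 3))./2)%:Z - ((s * s.-1)./2)%:Z).
have -> : E - (m * N.+1)%:Z - (m * h)%:Z - (h * h)%:Z + h%:Z
   = (E - (m * N)%:Z - (m * h)%:Z - (h * h)%:Z + h%:Z) + (- (m%:Z)).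
  by rewrite mulnS; lia.
rewrite expfzDr // -exprnN.
have e1 : u (N - s - h) = u N / (u s * u h).
  by rewrite -exprD -uB; [congr (_ ^+ _); lia | lia].
have e2 : u (N - m - h) = u N / (u m * u h).
  by rewrite -exprD -uB; [congr (_ ^+ _); lia | lia].
rewrite e1 e2 uB; last by lia.
rewrite /kap /c1 /c2 /c3 !exprS !exprD.
field.
have f1 : q * u N - 1 != 0 by rewrite -exprS uN1.
have f2 : q * u N + - x * u h != 0 by rewrite -exprS mulNr subxuN0 //; lia.
have f3 : u m * u h - q * u N != 0 by rewrite -exprS -exprD subuN0 //; lia.
have f4 : 1 - q * (u N * u s) != 0 by rewrite mulrA -exprS -exprD u1N0.
have f5 : u s - q * u N != 0 by rewrite -exprS subuN0 //; lia.
rewrite f1 f2 f3 f4 f5 m1z_nz; nz.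
Qed.

Definition w M j := qp (q ^- M) j * qp x j * u j / (qp q (j - s) * qp q (j + s)).
Definition Vc M := qp (q ^- M) s * qp x s * u s * qp (u s.+1 / x) (M - s)
   * x ^+ (M - s) * u s ^+ (M - s) / qp q (M + s).

Lemma w_step M j : (s <= j)%N ->
  w M j.+1 * ((1 - u j.+1 / u s) * (1 - u j.+1 * u s))
  = w M j * ((1 - u j / u M) * (1 - x * u j) * q).
Proof.
move=> hsj.
rewrite /w subSn // addSn !qpS.
have ek : u j = u (j - s) * u s by rewrite -exprD subnK.
rewrite !exprS exprD ek; field.
have n1 : 1 - q * (u (j - s) * u s * u s) != 0 by rewrite -ek -exprD -exprS u1N0.
have n2 : 1 - q * u (j - s) != 0 by rewrite -exprS u1N0.
rewrite n1 n2; nz.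
Qed.

Lemma w_top M : w M M.+1 = 0.
Proof. by rewrite /w (@qp_zero _ _ _ M) ?mul0r // mulVf ?uN0. Qed.

Lemma CV_step M : (s <= M)%N ->
  \sum_(s <= j < M.+1) w M j = Vc M -> \sum_(s <= j < M.+2) w M.+1 j = Vc M.+1.
Proof.
move=> hsM IH.
set a := (u M.+1)^-1.
have h1a : 1 - a != 0 by rewrite inv1N0.
have hxa : x * a - 1 != 0.
  rewrite /a subr_eq0; apply/negP => /eqP e.
  by move: (hxq M.+1); rewrite -[x](divfK (uN0 M.+1)) e mul1r eqxx.
set lam := a / ((1 - a) * (x * a - 1)).
set sig := (1 - a)^-1 + lam * ((u s)^-1 + u s - a - x).
set G := fun j => lam * w M.+1 j * ((1 - u j / u s) * (1 - u j * u s)) / u j.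
have hw : forall j, w M j = w M.+1 j * (1 - a * u j) / (1 - a).
  by move=> j; rewrite /w qp_contig -/a; field; rewrite h1a; nz.
have tel : \sum_(s <= j < M.+2) (sig * w M.+1 j - w M j) = G M.+2 - G s.
  apply: telescope_sumr_eq; first by lia.
  move=> j /andP[hj _].
  rewrite /G.
  have -> : lam * w M.+1 j.+1 * ((1 - u j.+1 / u s) * (1 - u j.+1 * u s)) / u j.+1
     = lam * (w M.+1 j.+1 * ((1 - u j.+1 / u s) * (1 - u j.+1 * u s))) / u j.+1 by ring.
  rewrite w_step // hw /sig /lam /a !exprS; field.
  have f1 : x + -1 * (q * u M) != 0.
    by rewrite mulN1r -exprS subr_eq0 hxq.
  by rewrite f1 ?uN1 -?exprS ?uN1 //; nz.
have G0 : G M.+2 = 0 by rewrite /G w_top mulr0 !mul0r.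
have Gs : G s = 0 by rewrite /G divff ?uN0 // subrr !mul0r mulr0 mul0r.
have eM : \sum_(s <= j < M.+2) w M j = Vc M.
  by rewrite big_nat_recr /= ?w_top ?addr0 //; lia.
move: tel; rewrite G0 Gs subrr sumrB -mulr_sumr eM => /eqP; rewrite subr_eq0 => /eqP eV.
have sigE : sig = (1 - u s * a) * (1 - u M.+1 * u s) / ((1 - a) * x * u s * (1 - u M.+1 / x)).
  rewrite /sig /lam /a; field.
  have f1 : x - u M.+1 != 0 by rewrite subr_eq0 hxq.
  by rewrite f1 ?uN1 //; nz.
have sigN0 : sig != 0.
  rewrite sigE; apply: mulf_neq0; last first.
    rewrite invr_neq0 // !mulf_neq0 ?uN0 //.
    rewrite subr_eq0 eq_sym; apply/negP => /eqP e.
    have e2 : u M.+1 = x by rewrite -[x]mul1r -e divfK.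
    by move: (hxq M.+1); rewrite e2 eqxx.
  rewrite mulf_neq0 // ?u1N0 -?exprD ?u1N0 //.
  by rewrite /a divN1 // u_neq // ltnS.
have -> : \sum_(s <= j < M.+2) w M.+1 j = Vc M / sig by rewrite -eV mulrC mulKf.
rewrite /Vc qp_contig -/a.
have -> : (M.+1 - s = (M - s).+1)%N by lia.
rewrite addSn !qpS !exprS uB // sigE /a exprD (exprS q M); field.
have f1 : 1 - q * (u M * u s) != 0 by rewrite mulrA -exprS -exprD u1N0.
have f2 : x - q * u M != 0 by rewrite -exprS subr_eq0 hxq.
have f3 : q * u M - u s != 0 by rewrite -exprS subuN0 //; apply/eqP; lia.
by rewrite f1 f2 f3 -exprS uN1 //; nz.
Qed.

Lemma CV M : (s <= M)%N -> \sum_(s <= j < M.+1) w M j = Vc M.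
Proof.
move=> hsM; rewrite -(subnKC hsM).
elim: (M - s)%N => [|d IH].
  rewrite addn0 big_nat1 /w /Vc subnn !qp0 !expr0; field; nz.
rewrite addnS; apply: CV_step => //; lia.
Qed.

Lemma qp_neg A k : (k <= A)%N ->
  qp (q ^- A) k = (-1) ^+ k * q ^ (((k * k.-1)./2)%:Z - (A * k)%:Z) * qp q A / qp q (A - k).
Proof.
elim: k => [|k IH] hk.
  by rewrite qp0 subn0 expr0 mul1r /= muln0 subrr expr0z mul1r divff // qpqN0.
rewrite qpS IH; last by lia.
have eA : qp q (A - k) = qp q (A - k.+1) * (1 - q * u (A - k.+1)).
  by rewrite -qpS; congr (qp q _); lia.
have ez : q ^ (((k.+1 * k.+1.-1)./2)%:Z - (A * k.+1)%:Z)
    = q ^ (((k * k.-1)./2)%:Z - (A * k)%:Z) * (u k / u A).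
  rewrite -(@qz _ _ hq0 (k%:Z - A%:Z)) // -expfzDr //; congr (_ ^ _).
  have := half_tri k; have := half_tri k.+1; simpl; nia.
have eu : u (A - k.+1) = u A / (q * u k) by rewrite -exprS uB.
have f1 : 1 - q * u (A - k.+1) != 0 by rewrite -exprS u1N0.
rewrite eA ez exprSr; move: f1; rewrite eu => f1; field.
by rewrite subuN0 ?qpqN0 ?uN0 ?hq0 //; rewrite neq_ltn hk.
Qed.

Lemma L_split t : Phi (m + h) t (m + h).+1 = Phi (m + h) t m.+1 + F (m + h) (m + h) * u (m + h) ^+ t.
Proof.
rewrite /Phi big_nat_recr /=; last by lia.
rewrite (@big_cat_nat _ _ _ m.+1) /=; [|lia|lia].
rewrite [X in _ + X + _](_ : _ = 0) ?addr0 //.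
rewrite big_nat_cond big1 // => k /andP[/andP[h1 h2] _].
by rewrite /F P_mid ?mulr0 ?mul0r.
Qed.

Lemma key_j j : qp (q ^- (m + h)) j * P j * (1 - (u (m + h))^-1 * u j)
   = qp (q ^- (m + h)) h * qp (q ^- m) j.
Proof.
have gen : forall b, qp b h = (1 - b) * qp (b * q) h.-1.
  move=> b; rewrite -[in LHS](prednK hh) -add1n qp_add qpS qp0 expr0 mulr1 mul1r.
  by rewrite expr1.
have eb : (u (m + h))^-1 * u j * q = q ^ (j%:Z - m%:Z - h%:Z + 1).
  rewrite (@qz _ _ hq0 _ j.+1 (m + h)); last by lia.
  by rewrite exprS; field; nz.
have ea : q ^- (m + h) * u h = q ^- m by rewrite exprD; field; nz.
rewrite -mulrA [P j * _]mulrC /P -eb -gen -qp_add (addnC j h) qp_add ea.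
by [].
Qed.

Lemma base_sum : u (m + h) * Phi (m + h) 2 m.+1 - u (m + h) ^+ 2 * Phi (m + h) 1 m.+1
  = - u (m + h) ^+ 2 * qp (q ^- (m + h)) h * Vc m.
Proof.
rewrite -CV // /Phi !mulr_sumr -sumrB; apply: eq_bigr => j _.
rewrite /F /w.
have -> : u (m + h) * (qp (q ^- (m + h)) j * qp x j * P j / (qp q (j - s) * qp q (j + s)) * u j ^+ 2)
   - u (m + h) ^+ 2 * (qp (q ^- (m + h)) j * qp x j * P j / (qp q (j - s) * qp q (j + s)) * u j ^+ 1)
   = (- u (m + h) ^+ 2 * qp x j * u j / (qp q (j - s) * qp q (j + s)))
     * (qp (q ^- (m + h)) j * P j * (1 - (u (m + h))^-1 * u j)).
  by field; nz.
rewrite key_j; field; nz.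
Qed.

Lemma sign_lem : (-1 : K) ^ (m%:Z - s%:Z - 1)
   = - ((-1) ^- (m + h) * (-1) ^- h * (-1) ^- s).
Proof.
rewrite !invr_sign.
have n1 : (-1 : K) != 0 by rewrite oppr_eq0 oner_eq0.
rewrite (_ : m%:Z - s%:Z - 1 = (m - s)%N%:Z + (-1)); last by lia.
rewrite expfzDr // exprN1 invrN1 -exprnP -!exprD.
rewrite (_ : (m + h + h + s = (m - s) + 2 * (h + s))%N); last by lia.
rewrite exprD exprM (_ : (-1 : K) ^+ 2 = 1); last by rewrite expr2 mulrNN mulr1.
by rewrite expr1n mulr1 mulrN1.
Qed.

Lemma base : C (m + h) = R (m + h).
Proof.
rewrite /C !L_split.
set J1 := Phi (m + h) 1 m.+1; set J2 := Phi (m + h) 2 m.+1.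
set f := F (m + h) (m + h).
transitivity (f * (u (m + h) * J2 - u (m + h) ^+ 2 * J1)); first by ring.
rewrite /J1 /J2 base_sum /f /F /Vc /R.
have -> : P (m + h) = qp q h.-1.
  by rewrite /P (_ : _ - _ - _ + 1 = 1); [rewrite expr1z | lia].
rewrite !qp_neg //; last by lia.
rewrite subnn addnK !qp0.
rewrite (_ : (m + h - s - h = m - s)%N); last by lia.
rewrite (_ : (m + h - m - h = 0)%N); last by lia.
rewrite qp0 sign_lem.
have eE : q ^ (((m * (m + 3))./2)%:Z - ((s * s.-1)./2)%:Z - (m * (m + h))%:Z
      - (m * h)%:Z - (h * h)%:Z + h%:Z)
    = q ^ ((((m + h) * (m + h).-1)./2)%:Z - ((m + h) * (m + h))%:Z)
      * q ^ (((h * h.-1)./2)%:Z - ((m + h) * h)%:Z)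
      * q ^ (((s * s.-1)./2)%:Z - (m * s)%:Z)
      * (u (m + h) ^+ 2 * (u s * u s ^+ (m - s))).
  rewrite -[u (m + h) ^+ 2]exprM -[u s ^+ (m - s)]exprM -[u s * _]exprD -exprD exprnP.
  by rewrite -!expfzDr //; congr (_ ^ _); apply: ar.
rewrite eE; field.
have sN : forall k, (-1 : K) ^+ k != 0 by move=> k; rewrite expf_neq0 // oppr_eq0 oner_eq0.
by rewrite !sN oppr_eq0 oner_eq0; nz.
Qed.

Lemma main N : (m + h <= N)%N -> C N = R N.
Proof.
move=> hN; rewrite -(subnKC hN); elim: (N - (m + h))%N => [|d IH].
  by rewrite addn0 base.
have hd : (m + h <= m + h + d)%N by lia.
rewrite addnS; have hk : kap (m + h + d).+1 != 0 by apply: kap_nz; lia.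
apply: (mulIf hk).
by rewrite -C_step // IH R_step.
Qed.

Lemma summand N j k :
  (qp (q ^- N) j * qp (q ^- N) k * qp x j * qp x k
       * qp (q ^ (j%:Z - m%:Z - h%:Z + 1)) h.-1
       * qp (q ^ (k%:Z - m%:Z - h%:Z + 1)) h.-1
       * (1 - q ^ (k%:Z - j%:Z)) * q ^+ (2 * j + k)%N)
    / (qp q (j - s) * qp q (j + s) * qp q (k - s) * qp q (k + s))
  = F N j * u j ^+ 2 * (F N k * u k ^+ 1) - F N j * u j ^+ 1 * (F N k * u k ^+ 2).
Proof.
rewrite (@qz _ _ hq0 (k%:Z - j%:Z) k j erefl) exprD mulnC exprM /F /P; field; nz.
Qed.

Lemma final N : (m + h <= N)%N ->
  \sum_(s <= j < m.+1) \sum_(s <= k < N.+1)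
    (qp (q ^- N) j * qp (q ^- N) k * qp x j * qp x k
       * qp (q ^ (j%:Z - m%:Z - h%:Z + 1)) h.-1
       * qp (q ^ (k%:Z - m%:Z - h%:Z + 1)) h.-1
       * (1 - q ^ (k%:Z - j%:Z)) * q ^+ (2 * j + k)%N)
    / (qp q (j - s) * qp q (j + s) * qp q (k - s) * qp q (k + s))
  = R N.
Proof.
move=> hN; rewrite -main // /C /Phi !mulr_suml -sumrB; apply: eq_bigr => j _.
rewrite !mulr_sumr -sumrB; apply: eq_bigr => k _.
by rewrite summand.
Qed.
End Main.

Lemma qv_neq0 : qv != 0.
Proof. by rewrite /qv tofrac_eq0 polyC_eq0 polyX_eq0. Qed.

Lemma qv_pow k : qv ^+ k = tofrac ((('X : {poly rat}) ^+ k)%:P).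
Proof. by rewrite /qv -tofracXn -rmorphXn. Qed.

Lemma qv_neq1 k : (0 < k)%N -> qv ^+ k != 1.
Proof.
move=> hk; rewrite qv_pow -tofrac1 tofrac_eq -polyC1 (inj_eq polyC_inj).
apply/negP => /eqP e; move: (size_polyXn rat k); rewrite e size_poly1.
by case: k hk e => // k _ _ [].
Qed.

Lemma xv_neq0 : xv != 0.
Proof. by rewrite /xv tofrac_eq0 polyX_eq0. Qed.

Lemma xv_neq k : xv != qv ^+ k.
Proof.
rewrite qv_pow /xv tofrac_eq; apply/negP => /eqP e.
by move: (size_polyX {poly rat}); rewrite e size_polyC; case: (_ != 0).
Qed.

Theorem lemma4p3 (n h m s : nat) (hn : (0 < n)%N) (hh : (0 < h)%N)
    (hhnm : (h <= n - m)%N) (hsm : (s <= m)%N) :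
  \sum_(s <= j < m.+1) \sum_(s <= k < n.+1)
    (qpoch qv (qv ^- n) j * qpoch qv (qv ^- n) k
       * qpoch qv xv j * qpoch qv xv k
       * qpoch qv (qv ^ (j%:Z - m%:Z - h%:Z + 1)) h.-1
       * qpoch qv (qv ^ (k%:Z - m%:Z - h%:Z + 1)) h.-1
       * (1 - qv ^ (k%:Z - j%:Z)) * qv ^+ (2 * j + k)%N)
    / (qpoch qv qv (j - s) * qpoch qv qv (j + s)
       * qpoch qv qv (k - s) * qpoch qv qv (k + s))
  =
  (qpoch qv qv n ^+ 2 * qpoch qv qv h.-1 * qpoch qv xv s * qpoch qv xv (m + h)
     * qpoch qv (qv ^+ s.+1 / xv) (n - s - h) * xv ^+ (n - s - h)
     * qv ^ (((m * (m + 3))./2)%:Z - ((s * s.-1)./2)%:Z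
              - (m * n)%:Z - (m * h)%:Z - (h * h)%:Z + h%:Z))
  / ((-1) ^ (m%:Z - s%:Z - 1) * qpoch qv qv (m - s) * qpoch qv qv (m + s)
     * qpoch qv qv (n - s) * qpoch qv qv (n + s) * qpoch qv qv (n - m - h)).
Proof.
have hmh : (m + h <= n)%N by lia.
have H := @final RF qv xv qv_neq0 qv_neq1 xv_neq0 xv_neq h m s hh hsm n hmh.
rewrite /R in H; exact: H.
Qed.
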